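(* Let $S$ be a finite set, $f:S\to\mathbb{R}$ a fitness function to be maximized, $S_{\mathrm{opt}}$ the set of maximizers of $f$ and $S_{\mathrm{non}}=S\setminus S_{\mathrm{opt}}$ (assumed nonempty). Let $s1,s2$ be mutation operators on $S$ such that $s2$ is complementary to $s1$ on $f$, i.e. for every $x\in S_{\mathrm{non}}$ with $P_{s1}(x,x)=\rho(\mathbf{T}_{s1})$ it holds that $P_{s2}(x,x)<\rho(\mathbf{T}_{s1})$. Then there exists a strategy probability distribution $\mathbf{q}$ over $\{s1,s2\}$ such that the homogeneous mixed strategy (1+1) EA(s1,s2) with distribution $\mathbf{q}$ satisfies $R(\mathbf{T}_{\mathbf{q}})>R(\mathbf{T}_{s1})$ and $T(\mathbf{T}_{\mathbf{q}})<T(\mathbf{T}_{s1})$; i.e. its asymptotic convergence rate is larger and its asymptotic hitting time is shorter than those of the pure strategy EA(s1).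
   Context: A mutation operator $s$ on the finite set $S$ is a stochastic matrix $\mathbf{P}_{m,s}=[P_{m,s}(x,y)]_{x,y\in S}$ (probability that mutating $x$ yields $y$). Strict elitist selection between parent $x$ and offspring $y$ keeps $y$ if $f(y)>f(x)$ and keeps $x$ otherwise. The pure strategy (1+1) EA EA($s$) repeatedly mutates the current individual by $s$ and applies strict elitist selection; it is a homogeneous Markov chain on $S$ with transition probabilities $P_s(x,y)=P_{m,s}(x,y)$ if $f(y)>f(x)$, $P_s(x,y)=0$ if $y\neq x$ and $f(y)\le f(x)$, and $P_s(x,x)=1-\sum_{y:\,f(y)>f(x)}P_{m,s}(x,y)$. A (state-dependent) strategy probability distribution over operators $s1,\dots,s\kappa$ is a map $x\mapsto \mathbf{q}(x)=(q_{s1}(x),\dots,q_{s\kappa}(x))$ with $q_{sk}(x)\in[0,1]$ and $\sum_k q_{sk}(x)=1$. The homogeneous mixed strategy (1+1) EA with distribution $\mathbf{q}$ at each generation, with current individual $x$, chooses operator $sk$ with probability $q_{sk}(x)$, mutates $x$ by it, and applies strict elitist selection; its transition matrix is $P_{\mathbf{q}}(x,y)=\sum_{k}q_{sk}(x)P_{sk}(x,y)$. For such an EA with transition matrix $\mathbf{P}$, let $\mathbf{T}$ denote the submatrix $[P(x,y)]_{x,y\in S_{\mathrm{non}}}$ and $\rho(\mathbf{T})$ its spectral radius. The asymptotic convergence rate is $R(\mathbf{T})=-\ln\rho(\mathbf{T})$ (with $-\ln 0=+\infty$). The asymptotic hitting time is $T(\mathbf{T})=\rho((\mathbf{I}-\mathbf{T})^{-1})$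 if $\rho(\mathbf{T})<1$ and $T(\mathbf{T})=+\infty$ if $\rho(\mathbf{T})=1$. Subscripts $\mathbf{q}$ and $s$ indicate the matrices of the mixed strategy EA and of the pure strategy EA($s$), respectively. *)

(* Defs.v *)
From HB Require Import structures.
From mathcomp Require Import all_boot all_order all_algebra.
From mathcomp Require Import all_classical all_reals.
From mathcomp Require Import ereal exp.
From mathcomp.real_closed Require Import complex.
Set Implicit Arguments. Unset Strict Implicit. Unset Printing Implicit Defensive.
Import Order.TTheory GRing.Theory Num.Theory.
Local Open Scope ring_scope.
Local Open Scope classical_set_scope.

Section EA.
Variable R : realType.

Definition spectral_radius (n : nat) (A : 'M[R]_n) : R :=
  sup [set ComplexField.Normc.normc z | z in
        [set z : R[i] | eigenvalue (map_mx (real_complex R) A) z]].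

Definition conv_rate (n : nat) (T : 'M[R]_n) : \bar R :=
  if spectral_radius T == 0 then +oo%E else (- ln (spectral_radius T))%:E.

(* asymptotic hitting time  T(T) = rho((I - T)^-1) if rho(T) < 1, +oo otherwise
   (for the substochastic matrices considered, rho(T) <= 1) *)
Definition hitting_time (n : nat) (T : 'M[R]_n) : \bar R :=
  if spectral_radius T < 1 then (spectral_radius (invmx (1%:M - T)))%:E
  else +oo%E.

Variable S : finType.
Variable f : S -> R.

Definition S_opt : {set S} := [set x | [forall y, f y <= f x]].
Definition S_non : {set S} := ~: S_opt.

Definition stochastic (Pm : S -> S -> R) : Prop :=
  (forall x y, 0 <= Pm x y) /\ (forall x, \sum_(y : S) Pm x y = 1).

(* transition probabilities of the pure strategy (1+1) EA(s) with strict elitist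
   selection *)
Definition ea_trans (Pm : S -> S -> R) (x y : S) : R :=
  if f x < f y then Pm x y
  else if y == x then 1 - \sum_(z : S | f x < f z) Pm x z
  else 0.

Definition mixed_trans (q1 q2 : S -> R) (Pm1 Pm2 : S -> S -> R) (x y : S) : R :=
  q1 x * ea_trans Pm1 x y + q2 x * ea_trans Pm2 x y.

(* restriction T of a transition matrix to S_non, indexed via enum_val *)
Definition Tmat (P : S -> S -> R) : 'M[R]_#|S_non| :=
  \matrix_(i, j) P (enum_val i) (enum_val j).

Definition complementary (Pm1 Pm2 : S -> S -> R) : Prop :=
  forall x, x \in S_non ->
    ea_trans Pm1 x x = spectral_radius (Tmat (ea_trans Pm1)) ->
    ea_trans Pm2 x x < spectral_radius (Tmat (ea_trans Pm1)).

End EA.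

(* Main.v *)
Require Import Defs.
From HB Require Import structures.
From mathcomp Require Import all_boot all_order all_algebra all_fingroup.
From mathcomp Require Import all_classical all_reals.
From mathcomp Require Import ereal exp.
From mathcomp.real_closed Require Import complex.
Import Order.TTheory GRing.Theory Num.Theory.
Local Open Scope ring_scope.
Set Implicit Arguments. Unset Strict Implicit.

Section Gen.
Variable R : realType.

Definition gtri (F : nzRingType) n (B : 'M[F]_n) (g : 'I_n -> R) :=
  forall i j, i != j -> B i j != 0 -> g i < g j.

Lemma det_gtri (F : comNzRingType) n (B : 'M[F]_n) g :
  gtri B g -> \det B = \prod_i B i i.
Proof.
move=> hB; rewrite /determinant (bigD1 (1%g : 'S_n)) //= odd_perm1 expr0 mul1r.
rewrite [X in _ + X]big1 ?addr0; first by apply: eq_bigr => i _; rewrite perm1.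
move=> s hs.
case: (boolP [forall i, B i (s i) != 0]) => [/forallP hall|].
  have le i : g i <= g (s i).
    case: (eqVneq (s i) i) => [->//|ne]; apply/ltW/hB => //; first by rewrite eq_sym.
  have hsum : \sum_i (g (s i) - g i) = 0.
    by rewrite sumrB [X in _ - X](reindex_inj (@perm_inj _ s)) subrr.
  have ge0 i : true -> 0 <= g (s i) - g i by move=> _; rewrite subr_ge0.
  have e0 := psumr_eq0P ge0 hsum.
  exfalso; move/negP: hs; apply; apply/eqP/permP => i; rewrite perm1.
  apply/eqP; apply/negPn/negP => ne.
  have := hB i (s i) ltac:(by rewrite eq_sym) (hall i).
  by rewrite -subr_gt0 e0 ?ltxx.
move/forallPn => [i /negPn/eqP hi].
by rewrite (bigD1 i) //= hi !mul0r mulr0.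
Qed.
End Gen.
Section More.
Variable R : realType.
Lemma eig_gtri (F : fieldType) n (B : 'M[F]_n) (g : 'I_n -> R) a :
  gtri B g -> eigenvalue B a = [exists i, B i i == a].
Proof.
move=> hB.
rewrite /eigenvalue /eigenspace kermx_eq0 row_free_unit unitmxE unitfE negbK.
have hB' : gtri (B - a%:M) g.
  by move=> i j ij; rewrite !mxE (negbTE ij) mulr0n subr0; apply: hB.
rewrite (det_gtri hB') prodf_seq_eq0; apply/hasP/existsP => [[i _]|[i hi]].
  by rewrite !mxE eqxx mulr1n subr_eq0 => h; exists i.
by exists i; rewrite ?mem_index_enum // !mxE eqxx mulr1n subr_eq0.
Qed.

Lemma unit_gtri (F : fieldType) n (B : 'M[F]_n) (g : 'I_n -> R) :
  gtri B g -> (B \in unitmx) = [forall i, B i i != 0].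
Proof.
move=> hB; rewrite unitmxE unitfE (det_gtri hB) prodf_seq_neq0.
apply/allP/forallP => [h i|h i _]; last exact: h.
exact: h (mem_index_enum i).
Qed.

Lemma eig_inv (F : fieldType) n (B : 'M[F]_n) z :
  B \in unitmx -> eigenvalue (invmx B) z = (z != 0) && eigenvalue B z^-1.
Proof.
move=> uB; apply/eigenvalueP/andP => [[v hv nv]|[nz /eigenvalueP [v hv nv]]].
  have e : v = z *: (v *m B) by rewrite scalemxAl -hv mulmxKV.
  have nz : z != 0 by apply: contraNneq nv => z0; rewrite e z0 scale0r.
  split => //; apply/eigenvalueP; exists v => //.
  by rewrite {2}e scalerA mulVf // scale1r.
exists v => //.
have e : v = z^-1 *: (v *m invmx B) by rewrite scalemxAl -hv mulmxK.
by rewrite {2}e scalerA divff // scale1r.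
Qed.
End More.
Section Sr.
Variable R : realType.
Local Open Scope classical_set_scope.
Lemma normcR (x : R) : ComplexField.Normc.normc (real_complex R x) = `|x|.
Proof. by rewrite /ComplexField.Normc.normc /= expr0n /= addr0 sqrtr_sqr. Qed.

Lemma sr_of n (A : 'M[R]_n) (h : 'I_n -> R) (j : 'I_n) :
 (forall z, eigenvalue (map_mx (real_complex R) A) z <-> exists i, z = real_complex R (h i)) ->
 (forall i, `|h i| <= `|h j|) -> spectral_radius A = `|h j|.
Proof.
move=> hz hj; rewrite /spectral_radius.
set E := (X in sup X).
have Ej : E `|h j| by exists (real_complex R (h j)); [apply/hz; exists j | exact: normcR].
have ub : ubound E `|h j| by move=> y [z /hz [i ->] <-]; rewrite normcR.
apply/eqP; rewrite eq_le; apply/andP; split.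
  by apply: ge_sup => //; exists `|h j|.
apply: sup_upper_bound => //; split; [by exists `|h j| | by exists `|h j|].
Qed.
End Sr.
Section Sr2.
Variable R : realType.
Notation rc := (real_complex R).

Lemma gtri_map n (A : 'M[R]_n) (g : 'I_n -> R) : gtri A g -> gtri (map_mx rc A) g.
Proof. by move=> hA i j ij; rewrite mxE fmorph_eq0; apply: hA. Qed.

Lemma gtri_IB n (A : 'M[R]_n) (g : 'I_n -> R) : gtri A g -> gtri (1%:M - A) g.
Proof.
move=> hA i j ij; rewrite !mxE (negbTE ij) mulr0n sub0r oppr_eq0; apply: hA ij.
Qed.

Lemma eig_map_gtri n (A : 'M[R]_n) (g : 'I_n -> R) z : gtri A g ->
  eigenvalue (map_mx rc A) z <-> exists i, z = rc (A i i).
Proof.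
move=> hA; rewrite (eig_gtri _ (gtri_map hA)); split.
  by case/existsP => i /eqP <-; exists i; rewrite mxE.
by case=> i ->; apply/existsP; exists i; rewrite mxE.
Qed.

Lemma sr_gtri n (A : 'M[R]_n) (g : 'I_n -> R) j : gtri A g ->
  (forall i, `|A i i| <= `|A j j|) -> spectral_radius A = `|A j j|.
Proof.
move=> hA hj; apply: (sr_of (h := fun i => A i i)) => // z.
exact: (@eig_map_gtri n A g z hA).
Qed.

Lemma sr_inv_gtri n (A : 'M[R]_n) (g : 'I_n -> R) j : gtri A g ->
  (forall i, A i i <= A j j) -> A j j < 1 ->
  spectral_radius (invmx (1%:M - A)) = (1 - A j j)^-1.
Proof.
move=> hA hj j1.
have lt1 i : 0 < 1 - A i i by rewrite subr_gt0; apply: le_lt_trans (hj i) j1.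
have hC := gtri_map (gtri_IB hA).
have uC : map_mx rc (1%:M - A) \in unitmx.
  rewrite (unit_gtri hC); apply/forallP => i; rewrite !mxE fmorph_eq0 eqxx mulr1n.
  exact: lt0r_neq0 (lt1 i).
have -> : (1 - A j j)^-1 = `|(1 - A j j)^-1| by rewrite gtr0_norm // invr_gt0.
apply: (sr_of (h := fun i => (1 - A i i)^-1)).
  move=> z; rewrite map_invmx eig_inv // (eig_gtri _ hC); split.
    case/andP=> nz /existsP [i /eqP e]; exists i.
    by move: e; rewrite !mxE eqxx mulr1n fmorphV => e; rewrite -[z]invrK -e.
  case=> i ->; apply/andP; split.
    by rewrite fmorph_eq0 invr_eq0 lt0r_neq0.
  apply/existsP; exists i; rewrite fmorphV invrK !mxE eqxx mulr1n.
  by [].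
move=> i; rewrite !gtr0_norm ?invr_gt0 //.
by rewrite lef_pV2 ?posrE // lerB // hj.
Qed.
End Sr2.
Section Main.
Variable R : realType.
Variables (S : finType) (f : S -> R).

Lemma ea_off (P : S -> S -> R) x y : x != y -> ea_trans f P x y != 0 -> f x < f y.
Proof.
move=> xy; have yx : (y == x) = false by rewrite eq_sym; exact: negbTE.
rewrite /ea_trans; case: ifP => // _; by rewrite yx eqxx.
Qed.

Lemma ea_diag_bnd (P : S -> S -> R) x : stochastic P ->
  0 <= ea_trans f P x x <= 1.
Proof.
case=> hp hs; rewrite /ea_trans ltxx eqxx.
have s0 : 0 <= \sum_(z | f x < f z) P x z by apply: sumr_ge0.
have s1 : \sum_(z | f x < f z) P x z <= 1.
  rewrite -(hs x) [X in _ <= X](bigID (fun z => f x < f z)) /= lerDl.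
  exact: sumr_ge0.
apply/andP; split; first by rewrite subr_ge0.
by rewrite lerBlDr lerDl.
Qed.

Lemma mixed_off q1 q2 P1 P2 x y : x != y ->
  mixed_trans f q1 q2 P1 P2 x y != 0 -> f x < f y.
Proof.
move=> xy; rewrite /mixed_trans.
case: (boolP (f x < f y)) => // h.
have e P : ea_trans f P x y = 0 by rewrite /ea_trans (negbTE h) eq_sym (negbTE xy).
by rewrite !e !mulr0 addr0 eqxx.
Qed.

Lemma gtri_Tmat (P : S -> S -> R) :
  (forall x y, x != y -> P x y != 0 -> f x < f y) ->
  gtri (Tmat f P) (fun i => f (enum_val i)).
Proof.
move=> hP i j ij; rewrite mxE; apply: hP.
by apply: contra ij => /eqP /enum_val_inj ->.
Qed.

Lemma argmax n (i0 : 'I_n) (h : 'I_n -> R) : exists j, forall i, h i <= h j.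
Proof.
case: (@arg_maxP _ _ 'I_n i0 xpredT h isT) => j _ hj.
by exists j => i; apply: hj.
Qed.
End Main.
Theorem theorem3 (R : realType) (S : finType) (f : S -> R)
    (Pm1 Pm2 : S -> S -> R) :
  (exists x : S, x \in S_non f) ->
  stochastic Pm1 -> stochastic Pm2 ->
  complementary f Pm1 Pm2 ->
  exists q1 q2 : S -> R,
    (forall x, 0 <= q1 x /\ 0 <= q2 x /\ q1 x + q2 x = 1) /\
    (conv_rate (Tmat f (mixed_trans f q1 q2 Pm1 Pm2)) >
       conv_rate (Tmat f (ea_trans f Pm1)))%E /\
    (hitting_time (Tmat f (mixed_trans f q1 q2 Pm1 Pm2)) <
       hitting_time (Tmat f (ea_trans f Pm1)))%E.
Proof.
move=> [x0 hx0] st1 st2 hc.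
set i0 : 'I_#|S_non f| := enum_rank_in hx0 x0.
set g := fun i : 'I_#|S_non f| => f (enum_val i).
set T1 := Tmat f (ea_trans f Pm1).
have gT1 : gtri T1 g by apply: gtri_Tmat => x y; apply: ea_off.
have dT1 i : T1 i i = ea_trans f Pm1 (enum_val i) (enum_val i) by rewrite mxE.
have [j1 hj1] := argmax i0 (fun i => T1 i i).
set r1 := T1 j1 j1.
have r1ge0 : 0 <= r1 by rewrite /r1 dT1; case/andP: (@ea_diag_bnd R S f _ (enum_val j1) st1).
have r1le1 : r1 <= 1 by rewrite /r1 dT1; case/andP: (@ea_diag_bnd R S f _ (enum_val j1) st1).
have sr1 : spectral_radius T1 = r1.
  rewrite (sr_gtri gT1 (j := j1)) ?ger0_norm //.
  have T1ge0 i : 0 <= T1 i i.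
    by rewrite dT1; case/andP: (@ea_diag_bnd R S f _ (enum_val i) st1).
  by move=> i; rewrite !ger0_norm //; apply: hj1.
pose q1 := fun x => if ea_trans f Pm1 x x == r1 then 0 else 1 : R.
pose q2 := fun x => 1 - q1 x.
exists q1, q2.
have hq x : 0 <= q1 x /\ 0 <= q2 x /\ q1 x + q2 x = 1.
  rewrite /q2; split; [|split]; last by rewrite addrCA subrr addr0.
    by rewrite /q1; case: ifP => _; rewrite ?ler01 ?lexx.
  by rewrite /q1; case: ifP => _; rewrite ?subr0 ?subrr ?ler01 ?lexx.
split => //.
set Tq := Tmat f (mixed_trans f q1 q2 Pm1 Pm2).
have gTq : gtri Tq g by apply: gtri_Tmat => x y; apply: mixed_off.
have dTq i : Tq i i = mixed_trans f q1 q2 Pm1 Pm2 (enum_val i) (enum_val i) by rewrite mxE.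
have Tq_ge0 i : 0 <= Tq i i.
  rewrite dTq /mixed_trans; have [h1 [h2 _]] := hq (enum_val i).
  case/andP: (@ea_diag_bnd R S f _ (enum_val i) st1) => a _.
  case/andP: (@ea_diag_bnd R S f _ (enum_val i) st2) => b _.
  by rewrite addr_ge0 // mulr_ge0.
have Tq_lt i : Tq i i < r1.
  rewrite dTq /mixed_trans /q2 /q1.
  case: ifP => [/eqP e|/negbT ne].
    rewrite mul0r add0r subr0 mul1r.
    have := hc (enum_val i) (enum_valP i); rewrite -/T1 sr1; apply; exact: e.
  rewrite subrr mul0r addr0 mul1r lt_neqAle ne /=.
  by rewrite -dT1 hj1.
have [jq hjq] := argmax i0 (fun i => Tq i i).
set rq := Tq jq jq.
have srq : spectral_radius Tq = rq.
  rewrite (sr_gtri gTq (j := jq)) ?ger0_norm //.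
  by move=> i; rewrite !ger0_norm //; apply: hjq.
have rqr1 : rq < r1 by apply: Tq_lt.
have rq0 : 0 <= rq by apply: Tq_ge0.
have r1pos : 0 < r1 by apply: le_lt_trans rq0 rqr1.
split.
  rewrite /conv_rate sr1 srq (negbTE (lt0r_neq0 r1pos)).
  case: ifP => [_|/negbT rqn0]; first exact: ltry.
  have rqpos : 0 < rq by rewrite lt_neqAle eq_sym rqn0.
  by rewrite lte_fin ltrN2 ltr_ln ?posrE.
have rq1 : rq < 1 by apply: lt_le_trans rqr1 r1le1.
rewrite /hitting_time sr1 srq rq1.
case: ifP => [r11|_]; last exact: ltry.
rewrite (sr_inv_gtri gT1 hj1 r11) (sr_inv_gtri gTq hjq rq1) lte_fin.
rewrite ltf_pV2 ?posrE ?subr_gt0 //.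
by rewrite ltrD2l ltrN2.
Qed.
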